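(* Let $n,m\ge1$, $r>0$, and let $\mathbf b_1,\dots,\mathbf b_m\in[0,\infty)^n$ be nonzero vectors with nonnegative entries. Put $D_{ij}=\frac{r}{m}(\mathbf b_i\cdot\mathbf b_j)$ for $i,j=1,\dots,m$ and $\overline D=\max_{i,j}D_{ij}$. Define a sequence $\alpha^{(t)}=(\alpha^{(t)}_1,\dots,\alpha^{(t)}_m)$, $t=0,1,2,\dots$, by $\alpha^{(0)}_k=\sqrt{1/(\overline D m)}$ for all $k$, and, given $\alpha^{(t)}$: compute $E_i^{(t)}=\sum_{j=1}^m D_{ij}\alpha^{(t)}_i\alpha^{(t)}_j-1$ for $i=1,\dots,m$; choose an index $k=k_t$ with $|E^{(t)}_k|=\max_i|E^{(t)}_i|$; set $\alpha^{(t+1)}_i=\alpha^{(t)}_i$ for $i\ne k$ and $$\alpha^{(t+1)}_k=\frac{-s+\sqrt{s^2+4D_{kk}}}{2D_{kk}},\qquad s=\sum_{i\ne k}D_{ik}\alpha^{(t)}_i.$$ Then the set $\{\alpha^{(t)}_k: k=1,\dots,m,\ t\ge0\}$ is bounded above, and there is a number $B>0$ such that $\alpha^{(t)}_k>B$ for all $k$ and all $t$.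
   Context: Note $D$ is symmetric with nonnegative entries and $D_{kk}>0$. The update of $\alpha_k$ is the unique positive root of the quadratic $D_{kk}\alpha_k^2+s\alpha_k-1=0$, i.e. it makes the $k$-th equation of the system $\sum_j D_{kj}\alpha_k\alpha_j=1$ hold exactly. *)

(* Defs.v *)
From HB Require Import structures.
From mathcomp Require Import all_boot all_order all_algebra.
Set Implicit Arguments. Unset Strict Implicit. Unset Printing Implicit Defensive.
Import Order.TTheory GRing.Theory Num.Theory.
Local Open Scope ring_scope.

Definition Dmat (R : rcfType) (n m : nat) (r : R) (b : 'I_m -> 'I_n -> R)
  (i j : 'I_m) : R := r / m%:R * \sum_(l < n) b i l * b j l.

(* Dbar = max_{i,j} D_ij (the entries are >= 0, so starting the fold at 0
   gives the true maximum since m >= 1). *)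
Definition Dbar (R : rcfType) (n m : nat) (r : R) (b : 'I_m -> 'I_n -> R) : R :=
  \big[Num.max/0]_(i < m) \big[Num.max/0]_(j < m) Dmat r b i j.

Definition Eres (R : rcfType) (n m : nat) (r : R) (b : 'I_m -> 'I_n -> R)
  (a : 'I_m -> R) (i : 'I_m) : R :=
  \sum_(j < m) Dmat r b i j * a i * a j - 1.

(* Main.v *)
Require Import Defs.
From HB Require Import structures.
From mathcomp Require Import all_boot all_order all_algebra.
From mathcomp Require Import ring lra.
Import Order.TTheory GRing.Theory Num.Theory.
Local Open Scope ring_scope.

Lemma step_root (R : rcfType) (d s : R) : 0 < d -> 0 <= s ->
  0 < (- s + Num.sqrt (s ^+ 2 + 4 * d)) / (2 * d) /\
  (- s + Num.sqrt (s ^+ 2 + 4 * d)) / (2 * d) *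
   (d * ((- s + Num.sqrt (s ^+ 2 + 4 * d)) / (2 * d)) + s) = 1.
Proof.
move=> d0 s0.
set q := Num.sqrt _.
have hpos : 0 < s ^+ 2 + 4 * d by rewrite ltr_wpDl ?sqr_ge0 // mulr_gt0.
have hq2 : q ^+ 2 = s ^+ 2 + 4 * d by rewrite sqr_sqrtr // ltW.
have hsq : s < q.
  have := sqrtr_sqr s; rewrite ger0_norm // => <-.
  by rewrite /q ltr_sqrt // ltr_pwDr // mulr_gt0.
split.
  by apply: divr_gt0; [lra | rewrite mulr_gt0].
have dn0 : d != 0 by rewrite gt_eqF.
have -> : (- s + q) / (2 * d) * (d * ((- s + q) / (2 * d)) + s)
   = (q ^+ 2 - s ^+ 2) / (4 * d) by field; exact: dn0.
rewrite hq2; field; exact: dn0.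
Qed.

Lemma sum_bigD1_le (R : rcfType) (m : nat) (F : 'I_m -> R) (k : 'I_m) :
  (forall i, 0 <= F i) -> F k <= \sum_i F i.
Proof.
move=> h; rewrite (bigD1 k) //= lerDl; exact: sumr_ge0.
Qed.

Arguments sum_bigD1_le {R m} F k _.
Arguments step_root {R d s} _ _.

Theorem lemma2 (R : rcfType) (n m : nat) (r : R) (b : 'I_m -> 'I_n -> R)
  (alpha : nat -> 'I_m -> R) (kk : nat -> 'I_m) :
  (0 < n)%N -> (0 < m)%N -> 0 < r ->
  (forall i l, 0 <= b i l) ->
  (forall i, exists l, b i l != 0) ->
  (forall k, alpha 0%N k = Num.sqrt (1 / (Dbar r b * m%:R))) ->
  (forall t i, `|Eres r b (alpha t) i| <= `|Eres r b (alpha t) (kk t)|) ->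
  (forall t i, i != kk t -> alpha t.+1 i = alpha t i) ->
  (forall t, let k := kk t in
     let s := \sum_(i < m | i != k) Dmat r b i k * alpha t i in
     alpha t.+1 k = (- s + Num.sqrt (s ^+ 2 + 4 * Dmat r b k k)) / (2 * Dmat r b k k)) ->
  (exists M : R, forall t k, alpha t k <= M) /\
  (exists B : R, 0 < B /\ forall t k, B < alpha t k).
Proof.
move=> n0 m0 r0 bge bnz h0 _ hkeep hupd.
set D := Dmat r b.
have rm0 : 0 < r / m%:R by rewrite divr_gt0 // ltr0n.
have Dge : forall i j, 0 <= D i j.
  move=> i j; rewrite /D /Dmat; apply: mulr_ge0; first exact: ltW; apply: sumr_ge0 => l _.
  exact: mulr_ge0.
have Dsym : forall i j, D i j = D j i.
  by move=> i j; rewrite /D /Dmat; congr (_ * _); apply: eq_bigr => l _; rewrite mulrC.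
have Dpos : forall k, 0 < D k k.
  move=> k; rewrite /D /Dmat; apply: mulr_gt0 => //; case: (bnz k) => l hl.
  have hb : 0 < b k l by rewrite lt_def hl bge.
  have := sum_bigD1_le (fun l => b k l * b k l) l (fun i => mulr_ge0 (bge k i) (bge k i)).
  apply: lt_le_trans; exact: mulr_gt0.
have Dbar0 : 0 < Dbar r b.
  have i0 : 'I_m := Ordinal m0.
  apply: (lt_le_trans (Dpos i0)).
  apply: le_trans (le_bigmax 0 (fun i => \big[Num.max/0]_(j < m) Dmat r b i j) i0).
  exact: (le_bigmax 0 (fun j => Dmat r b i0 j) i0).
set a0 := Num.sqrt (1 / (Dbar r b * m%:R)).
have a0pos : 0 < a0.
  by rewrite /a0 sqrtr_gt0 divr_gt0 // mulr_gt0 // ltr0n.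
set M := a0 + \sum_k (1 + 1 / D k k).
have termM : forall k, 1 + 1 / D k k <= M.
  move=> k; rewrite /M; apply: ler_wpDl; first exact: ltW.
  apply: (sum_bigD1_le (fun k => 1 + 1 / D k k) k) => i.
  by rewrite addr_ge0 // divr_ge0 // ltW.
have a0M : a0 <= M.
  rewrite /M lerDl; apply: sumr_ge0 => i _.
  by rewrite addr_ge0 // divr_ge0 // ltW.
have M0 : 0 < M by apply: lt_le_trans a0M.
set C := \sum_k \sum_i D i k.
have C0 : 0 < C.
  have i0 : 'I_m := Ordinal m0.
  apply: (lt_le_trans (Dpos i0)).
  apply: le_trans (sum_bigD1_le (fun k => \sum_i D i k) i0 _).
    exact: (sum_bigD1_le (fun i => D i i0) i0).
  by move=> k; apply: sumr_ge0 => i _.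
set L := Num.min a0 (1 / (C * M)).
have L0 : 0 < L.
  by rewrite /L lt_min a0pos divr_gt0 // mulr_gt0.
have inv : forall t k, L <= alpha t k <= M.
  elim=> [|t IH] k.
    by rewrite h0 -/a0 a0M andbT /L ge_min lexx.
  case: (eqVneq k (kk t)) => [->|hk]; last by rewrite hkeep.
  have apos : forall i, 0 <= alpha t i.
    move=> i; case/andP: (IH i) => h _; apply: le_trans h; exact: ltW.
  set s := \sum_(i < m | i != kk t) D i (kk t) * alpha t i.
  have s0 : 0 <= s by apply: sumr_ge0 => i _; rewrite mulr_ge0.
  have := hupd t; rewrite /= -/D -/s => ->.
  have [xpos xeq] := step_root (Dpos (kk t)) s0.
  move: xpos xeq.
  set x := (- s + _) / _ => xpos xeq.
  set d := D (kk t) (kk t) in xpos xeq *.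
  have d0 : 0 < d by apply: Dpos.
  have xle : x <= 1 + 1 / d.
    have de : d * (1 / d) = 1 by rewrite mul1r mulfV // gt_eqF.
    have e0 : 0 <= 1 / d by rewrite divr_ge0 // ltW.
    have hsx : 0 <= s * x by rewrite mulr_ge0 // ltW.
    have h1 : d * x * x <= 1.
      have -> : d * x * x = 1 - s * x by rewrite -xeq; ring.
      lra.
    case: (lerP x 1) => hx; first lra.
    have dx0 : 0 < d * x by rewrite mulr_gt0.
    have h2 : d * x <= d * x * x by rewrite ler_peMr // ltW.
    have h3 : x = 1 / d * (d * x) by rewrite mulrA mul1r mulVf ?mul1r // gt_eqF.
    have h4 : 1 / d * (d * x) <= 1 / d * 1 by apply: ler_wpM2l => //; lra.
    lra.
  have xM : x <= M by apply: le_trans xle (termM _).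
  have sle : s <= \sum_(i < m | i != kk t) D i (kk t) * M.
    apply: ler_sum => i _; apply: ler_wpM2l => //.
    by case/andP: (IH i).
  have colle : d * M + \sum_(i < m | i != kk t) D i (kk t) * M <= C * M.
    have -> : d * M + \sum_(i < m | i != kk t) D i (kk t) * M = \sum_i D i (kk t) * M.
      by rewrite [RHS](bigD1 (kk t)) //=.
    rewrite -mulr_suml.
    rewrite ler_pM2r //.
    exact: (sum_bigD1_le (fun k => \sum_i D i k) (kk t) (fun k => sumr_ge0 _ (fun i _ => Dge i k))).
  have dxs : d * x + s <= C * M.
    apply: le_trans colle; apply: lerD => //; apply: ler_wpM2l => //; exact: ltW.
  rewrite xM andbT /L ge_min; apply/orP; right.
  have CM0 : 0 < C * M by rewrite mulr_gt0.
  rewrite ler_pdivrMr //.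
  rewrite -xeq; apply: ler_wpM2l; [exact: ltW | exact: dxs].
split.
  by exists M => t k; case/andP: (inv t k).
exists (L / 2); split; first by rewrite divr_gt0.
move=> t k; case/andP: (inv t k) => hL _; apply: lt_le_trans hL; lra.
Qed.
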